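(* Let $\mathcal{N}$ be a Beeping Network with $n$ nodes and maximum degree $\Delta$, where each node has a unique ID from $[1,n^c]$ for a constant $c\ge 1$, and each node $v$ knows $n$, the parameter $c$, the maximum degree $\Delta$, and its neighborhood $N(v)$ (the IDs of its neighbors), and holds a message $m_v$ of length at most $B>0$ bits. Then there is a deterministic distributed algorithm that solves Local Broadcast on $\mathcal{N}$ in $O(B\Delta^2\log n)$ beeping rounds.
   Context: A Beeping Network is a network of $n$ nodes whose topology is an undirected graph $G=(V,E)$; $N(v)$ denotes the set of neighbors of $v$. Time is divided into synchronous rounds and all nodes start simultaneously. In each round every node either beeps or listens; a listening node hears ''silence'' if no neighbor beeps and ''noise'' if at least one neighbor beeps, and cannot distinguish one beep from several. A beeping node receives no feedback in that round. Complexity is measured in rounds. Local Broadcast: every node $v$ holds a message $m_v$, and the problem is solved once, for every $v$, every node in $N(v)$ knows $m_v$. *)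

(* Defs.v *)
From mathcomp Require Import all_boot.
Set Implicit Arguments. Unset Strict Implicit. Unset Printing Implicit Defensive.

Definition simple_graph (V : finType) (e : rel V) : Prop :=
  symmetric e /\ irreflexive e.

Definition nbhd (V : finType) (e : rel V) (v : V) : {set V} := [set u | e v u].

Definition max_degree (V : finType) (e : rel V) : nat :=
  \max_(v : V) #|nbhd e v|.

Record Knowledge := mkKnowledge {
  k_n : nat; k_c : nat; k_Delta : nat; k_id : nat;
  k_nbr_ids : seq nat; k_msg : seq bool }.

(* The local history of a node
   is the sequence of what it heard in each past round (true = noise,
   false = silence; in rounds where the node beeped, it gets no feedback and
   false is recorded -- the node can recompute its own past actions anyway).
   - [act k h] : does the node beep in the next round?
   - [out k h j] : the node's current value for the message of its neighbour
     with ID j. *)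
Record BeepAlgorithm := mkBeepAlgorithm {
  act : Knowledge -> seq bool -> bool;
  out : Knowledge -> seq bool -> nat -> seq bool }.

Section Execution.
Variables (V : finType) (e : rel V) (know : V -> Knowledge) (A : BeepAlgorithm).

Fixpoint history (t : nat) : V -> seq bool :=
  match t with
  | 0 => fun _ => [::]
  | t'.+1 => fun v =>
      let h := history t' in
      let beeps u := act A (know u) (h u) in
      rcons (h v) (if beeps v then false else [exists u, e v u && beeps u])
  end.
End Execution.

Definition knowledge_of (V : finType) (e : rel V) (n c Delta : nat)
  (id : V -> nat) (m : V -> seq bool) (v : V) : Knowledge :=
  mkKnowledge n c Delta (id v) (sort leq [seq id u | u <- enum (nbhd e v)]) (m v).

Definition solves_local_broadcast_in (A : BeepAlgorithm) (V : finType) (e : rel V)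
  (n c Delta : nat) (id : V -> nat) (m : V -> seq bool) (T : nat) : Prop :=
  forall v u : V, e v u ->
    out A (knowledge_of e n c Delta id m u)
          (history e (knowledge_of e n c Delta id m) A T u) (id v) = m v.

(* Main.v *)
From Stdlib Require Import Lia.
Require Import Defs.
From mathcomp Require Import all_boot zify.
Set Implicit Arguments. Unset Strict Implicit.

Lemma bern1 (D a : nat) : a <= D -> D ^ a * (D - a) <= (D.-1) ^ a * D.
Proof.
elim: a => [|a IH] Ha; first by rewrite !expn0 subn0 mul1n.
have IH' := IH (ltnW Ha).
rewrite !expnS.
have H1 : D ^ a * (D - a) * D.-1 <= D.-1 ^ a * D * D.-1 by rewrite leq_mul2r IH' orbT.
set X := D ^ a in IH' H1 *. set Y := D.-1 ^ a in IH' H1 *.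
have H2 : X * (D * (D - a.+1)) <= X * (D - a) * D.-1.
  rewrite -mulnA leq_mul2l; apply/orP; right. nia.
nia.
Qed.

Lemma bern_half (D a : nat) : a.*2 <= D -> D ^ a <= 2 * (D.-1) ^ a.
Proof.
move=> H. case: D H => [|D] H.
  by move: H; rewrite leqn0 double_eq0 => /eqP ->.
have h : D.+1 ^ a * (D.+1 - a) <= D.+1.-1 ^ a * D.+1.
  by apply: bern1; move: H; rewrite -addnn; lia.
have : D.+1 ^ a * D.+1 <= 2 * D.+1.-1 ^ a * D.+1.
  apply: leq_trans (_ : D.+1 ^ a * (2 * (D.+1 - a)) <= _).
    rewrite leq_mul2l; apply/orP; right. move: H; rewrite -addnn; clear h; lia.
  move: h; set X := D.+1 ^ a; set Y := D.+1.-1 ^ a; rewrite mulnCA -mulnA [Y * _]mulnC; move=> h; by rewrite leq_mul2l h orbT.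
by rewrite leq_mul2r.
Qed.

Lemma bern2aux (b k : nat) : b ^ k.+1 + k * b ^ k <= (b.+1) ^ k * b.
Proof.
elim: k => [|k IH]; first by rewrite expn1 expn0 mul0n addn0 mul1n.
rewrite expnS [b.+1 ^ k.+1]expnS -mulnA.
apply: leq_trans (_ : b.+1 * (b ^ k.+1 + k * b ^ k) <= _); last by rewrite leq_mul2l IH orbT.
rewrite !expnS. set X := b ^ k. nia.
Qed.

Lemma bern2 (M : nat) : 0 < M -> 2 * (M.-1) ^ M <= M ^ M.
Proof.
case: M => [|M] // _. case: M => [|b]; first by [].
have h := bern2aux b.+1 b.+2.
rewrite -(@leq_pmul2r b.+1) //.
apply: leq_trans h. rewrite !expnS. set X := b.+1 ^ b. nia.
Qed.

Lemma prod_const_pred (I : finType) (P : pred I) c : \prod_(i | P i) c = c ^ #|P|.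
Proof. exact: prod_nat_const. Qed.

Definition Gd N D Δ (x : 'I_N) (y : {ffun 'I_Δ -> 'I_N}) : {set {ffun 'I_N -> 'I_D}} :=
  [set f : {ffun 'I_N -> 'I_D} | (val (f x) == 0) && [forall i, val (f (y i)) != 0]].

Lemma Gd_card N D Δ (x : 'I_N) (y : {ffun 'I_Δ -> 'I_N}) :
  0 < D -> Δ.*2 <= D -> (forall i, y i != x) -> D ^ N <= 2 * D * #|Gd D x y|.
Proof.
move=> D0 HD Hy.
pose R := [set y i | i in 'I_Δ].
have xR : x \notin R.
  by apply/imsetP => [[i _ E]]; move: (Hy i); rewrite -E eqxx.
pose Z := [set k : 'I_D | val k == 0].
pose Fam := fun z : 'I_N => if z == x then Z else if z \in R then ~: Z else [set: 'I_D].
have sub : family Fam \subset Gd D x y.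
  apply/subsetP => f /familyP Hf; rewrite inE; apply/andP; split.
    by have := Hf x; rewrite /Fam eqxx inE.
  apply/forallP => i; have := Hf (y i); rewrite /Fam (negbTE (Hy i)).
  have yR : y i \in R by apply/imsetP; exists i.
  by rewrite yR !inE.
have cZ : #|Z| = 1.
  rewrite (_ : Z = [set Ordinal D0]) ?cards1 //.
  by apply/setP => k; rewrite !inE -val_eqE.
have cZC : #|~: Z| = D.-1 by have := cardsC Z; rewrite cZ card_ord; lia.
apply: leq_trans (_ : 2 * D * #|family Fam| <= _); last by rewrite leq_mul2l subset_leq_card ?orbT.
rewrite card_family foldrE big_map big_enum /=.
have -> : D ^ N = \prod_(z : 'I_N) D by rewrite prod_nat_const card_ord.
rewrite (bigD1 x) // [X in _ <= _ * X](bigD1 x) // {1}/Fam eqxx cZ.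
rewrite (bigID (fun z => z \in R)) [X in _ <= _ * (_ * X)](bigID (fun z => z \in R)).
rewrite [X in _ <= _ * (_ * (X * _))](eq_bigr (fun=> D.-1)); last first.
  by move=> i /andP[/andP[_ Hx] HR]; rewrite /Fam (negbTE Hx) HR cZC.
rewrite [X in _ <= _ * (_ * (_ * X))](eq_bigr (fun=> D)); last first.
  by move=> i /andP[/andP[_ Hx] HR]; rewrite /Fam (negbTE Hx) (negbTE HR) cardsT card_ord.
rewrite !prod_const_pred mul1n.
have -> : #|(fun i : 'I_N => (i \in 'I_N) && (i != x) && (i \in R))| = #|(fun i : 'I_N => true && (i != x) && (i \in R))| by apply: eq_card.
set a := #|(fun i : 'I_N => true && (i != x) && (i \in R))|.
set b := #|(fun i : 'I_N => true && (i != x) && (i \notin R))|.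
have ha : a <= Δ.
  apply: leq_trans (_ : #|R| <= _); last by apply: leq_trans (leq_imset_card _ _) _; rewrite card_ord.
  by apply: subset_leq_card; apply/subsetP => i; rewrite unfold_in /= => /andP[].
have hd : a.*2 <= D by apply: leq_trans HD; rewrite leq_double.
have := bern_half hd.
move=> h. change (D * (D ^ a * D ^ b) <= 2 * D * (D.-1 ^ a * D ^ b)).
apply: (@leq_trans (D * (2 * D.-1^a * D^b))); first by rewrite leq_mul2l leq_mul2r h !orbT.
by rewrite !mulnA [D * 2]mulnC.
Qed.

Lemma union_bound (T I : finType) (A : {pred T}) (Q : I -> {pred T}) :
  (forall x, x \in A -> exists i, x \in Q i) -> #|A| <= \sum_i #|Q i|.
Proof.
move=> H.
have E : forall i, #|Q i| = \sum_x (x \in Q i : nat).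
  by move=> i; rewrite -sum1_card big_mkcond /=; apply: eq_bigr => x _; case: (x \in Q i).
under eq_bigr do rewrite E.
rewrite exchange_big /= -sum1_card.
apply: leq_trans (_ : \sum_(x in A) \sum_i (x \in Q i : nat) <= _).
  apply: leq_sum => x /H [i Hi]; rewrite (bigD1 i) //= Hi; exact: leq_addr.
by rewrite [X in _ <= X](bigID (fun x => x \in A)) /= leq_addr.
Qed.

Lemma leq_expl m n e : m <= n -> m ^ e <= n ^ e.
Proof. move=> h; elim: e => [|e IH] //; rewrite !expnS leq_mul //. Qed.

Definition goodG N D Δ t (F : {ffun 'I_t -> {ffun 'I_N -> 'I_D}}) : bool :=
  [forall x : 'I_N, forall y : {ffun 'I_Δ -> 'I_N},
     [forall i, y i != x] ==> [exists j, F j \in Gd D x y]].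

Lemma exists_goodG N D Δ t : 0 < D -> Δ.*2 <= D ->
  N ^ Δ.+1 * (2 * D).-1 ^ t < (2 * D) ^ t ->
  exists F : {ffun 'I_t -> {ffun 'I_N -> 'I_D}}, goodG Δ F.
Proof.
move=> D0 HD Hlt.
pose FT := {ffun 'I_t -> {ffun 'I_N -> 'I_D}}.
pose W := D ^ N.
have cW : #|{ffun 'I_N -> 'I_D}| = W by rewrite card_ffun !card_ord.
pose Bad (p : 'I_N * {ffun 'I_Δ -> 'I_N}) : {pred FT} :=
  [pred F : FT | [forall i, p.2 i != p.1] && [forall j, F j \notin Gd D p.1 p.2]].
have HB : forall p, #|Bad p| * (2 * D) ^ t <= (W * (2 * D).-1) ^ t.
  move=> [x y]; rewrite /Bad /=.
  case: (boolP [forall i, y i != x]) => Hy; last first.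
    by rewrite (eq_card0 (A := [pred F : FT | false && _])) // mul0n.
  have -> : #|[pred F : FT | true && [forall j, F j \notin Gd D x y]]| =
            #|ffun_on_mem 'I_t (mem (~: Gd D x y))|.
    apply: eq_card => F; rewrite !inE /=; apply/forallP/ffun_onP => h j;
      by move: (h j); rewrite ?inE.
  rewrite card_ffun_on card_ord -expnMn; apply: leq_expl.
  have hG := Gd_card D0 HD (fun i => forallP Hy i).
  have := cardsC (Gd D x y); rewrite cW => hc.
  rewrite -hc. have hG' : #|Gd D x y| + #|~: Gd D x y| <= 2 * D * #|Gd D x y| by rewrite hc.
  move: hG'; set G := #|Gd D x y|; set C := #|~: Gd D x y|. clear. nia.
have Hsub : forall F : FT, F \in [pred F : FT | ~~ goodG Δ F] -> exists p, F \in Bad p.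
  move=> F; rewrite inE => /forallPn [x /forallPn [y]]; rewrite negb_imply => /andP[Hy Hn].
  exists (x, y); rewrite inE /= Hy /=; apply/forallP => j; apply: contraNN Hn => h.
  by apply/existsP; exists j.
have Hcard := union_bound Hsub.
have Hsum : #|[pred F : FT | ~~ goodG Δ F]| * (2 * D) ^ t < W ^ t * (2 * D) ^ t.
  eapply leq_ltn_trans; first (apply: leq_mul; [exact: Hcard | exact: leqnn]).
  rewrite big_distrl /=.
  eapply leq_ltn_trans; first (apply: leq_sum => p _; exact: HB).
  rewrite sum_nat_const card_prod card_ffun !card_ord -expnS expnMn.
  rewrite mulnCA ltn_pmul2l; first exact: Hlt.
  by rewrite /W !expn_gt0 D0.
have Hlt2 : #|[pred F : FT | ~~ goodG Δ F]| < #|FT|.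
  rewrite card_ffun cW card_ord.
  by move: Hsum; rewrite ltn_pmul2r // expn_gt0 muln_gt0 D0.
have := cardC [pred F : FT | ~~ goodG Δ F].
move=> hc. have : 0 < #|[predC [pred F : FT | ~~ goodG Δ F]]|.
  rewrite -(ltn_add2l #|[pred F : FT | ~~ goodG Δ F]|) addn0 hc. exact: Hlt2.
by move=> /card_gt0P [F]; rewrite !inE negbK => HF; exists F.
Qed.

Definition Dn (Δ : nat) := (Δ.*2).+1.
Definition kk (n c Δ : nat) := (c * up_log 2 n + 2) * Δ.+1.
Definition tt (n c Δ : nat) := (2 * Dn Δ) * kk n c Δ.
Definition Nn (n c : nat) := (n ^ c).+1.
Definition famT (n c Δ : nat) := {ffun 'I_(tt n c Δ) -> {ffun 'I_(Nn n c) -> 'I_(Dn Δ)}}.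
Definition fam (n c Δ : nat) : option (famT n c Δ) := [pick F : famT n c Δ | goodG Δ F].

Lemma param_ok n c Δ :
  Nn n c ^ Δ.+1 * (2 * Dn Δ).-1 ^ tt n c Δ < (2 * Dn Δ) ^ tt n c Δ.
Proof.
rewrite /tt; set M := 2 * Dn Δ; set k := kk n c Δ.
have M1 : 0 < M.-1 by rewrite /M /Dn; lia.
have h1 : 2 ^ k * M.-1 ^ (M * k) <= M ^ (M * k).
  by rewrite (expnM M.-1 M k) (expnM M M k) -expnMn; apply: leq_expl; apply: bern2; rewrite /M /Dn.
apply: leq_trans h1.
rewrite ltn_pmul2r ?expn_gt0 ?M1 //.
rewrite /k /kk expnM ltn_exp2r //.
have hn := @up_logP 2 n erefl.
have : n ^ c <= 2 ^ (c * up_log 2 n).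
  by rewrite mulnC expnM; apply: leq_expl.
rewrite /Nn expnD => h. have := expn_gt0 2 (c * up_log 2 n). lia.
Qed.

Lemma fam_some n c Δ : exists F, fam n c Δ = Some F /\ goodG Δ F.
Proof.
rewrite /fam; case: pickP => [F HF|H]; first by exists F.
have [F HF] := exists_goodG (N := Nn n c) (D := Dn Δ) (Δ := Δ) (t := tt n c Δ)
  (ltn0Sn _) (leqnSn _) (param_ok n c Δ).
by move: (H F); rewrite HF.
Qed.

Definition evz n c Δ (F : famT n c Δ) (j x : nat) : bool :=
  if (insub j : option 'I_(tt n c Δ)) is Some j' then
    if (insub x : option 'I_(Nn n c)) is Some x' then val (F j' x') == 0 else false
  else false.

Lemma evzE n c Δ (F : famT n c Δ) (j : 'I_(tt n c Δ)) x :
  x <= n ^ c -> evz F j x = (val (F j (inord x)) == 0).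
Proof.
move=> hx. have hx' : x < Nn n c by [].
rewrite /evz (insubT (fun j => j < tt n c Δ) (ltn_ord j)) (insubT (fun x => x < Nn n c) hx').
have -> : Sub (val j) (ltn_ord j) = j by apply: val_inj.
have -> : (Sub x hx' : 'I_(Nn n c)) = inord x by apply: val_inj; rewrite /= inordK.
by [].
Qed.

Fixpoint enc (m : seq bool) : seq bool :=
  if m is b :: m' then true :: b :: enc m' else [:: false].

Fixpoint dec (fuel : nat) (g : nat -> bool) : seq bool :=
  if fuel is f.+1 then (if g 0 then g 1 :: dec f (fun k => g k.+2) else [::]) else [::].

Lemma size_enc m : size (enc m) = (size m).*2.+1.
Proof. by elim: m => [|b m IH] //=; rewrite IH doubleS. Qed.

Lemma dec_enc m fuel g : size m < fuel ->
  (forall k, k < size (enc m) -> g k = nth false (enc m) k) -> dec fuel g = m.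
Proof.
elim: m fuel g => [|b m IH] [|f] g //= hf hg.
  by rewrite (hg 0 erefl).
rewrite (hg 0 erefl) (hg 1 erefl) /=; congr (_ :: _).
apply: IH => // k hk; rewrite hg //.
Qed.

Definition alg : BeepAlgorithm := mkBeepAlgorithm
  (fun kn h =>
     match fam (k_n kn) (k_c kn) (k_Delta kn) with
     | Some F => evz F (size h %% tt (k_n kn) (k_c kn) (k_Delta kn)) (k_id kn)
                 && nth false (enc (k_msg kn)) (size h %/ tt (k_n kn) (k_c kn) (k_Delta kn))
     | None => false end)
  (fun kn h j =>
     match fam (k_n kn) (k_c kn) (k_Delta kn) with
     | Some F =>
        let t := tt (k_n kn) (k_c kn) (k_Delta kn) in
        let L := k_id kn :: filter (fun z => z != j) (k_nbr_ids kn) in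
        let P := fun s => evz F s j && all (fun z => ~~ evz F s z) L in
        let s := find P (iota 0 t) in
        dec (size h) (fun k => nth false h (k * t + s))
     | None => [::] end).

Lemma hist_size (V : finType) (e : rel V) kn (A : BeepAlgorithm) r v :
  size (history e kn A r v) = r.
Proof. by elim: r v => [|r IH] v //=; rewrite size_rcons IH. Qed.

Lemma hist_nth (V : finType) (e : rel V) kn (A : BeepAlgorithm) T r v : r < T ->
  nth false (history e kn A T v) r =
  (if act A (kn v) (history e kn A r v) then false
   else [exists u, e v u && act A (kn u) (history e kn A r u)]).
Proof.
elim: T v => [|T IH] v //= hr.
rewrite nth_rcons hist_size.
case: (ltngtP r T) => h; first by rewrite IH.
  by lia.
by subst.
Qed.

Lemma time_ok c B Δ l : 0 < B -> 0 < Δ -> 0 < l ->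
  (B.*2.+1) * (2 * Dn Δ * ((c * l + 2) * Δ.+1)) <= 36 * (c + 2) * B * Δ ^ 2 * l.
Proof.
move=> hB hD hl.
have h1 : B.*2.+1 <= 3 * B by lia.
have h2 : 2 * Dn Δ <= 6 * Δ by rewrite /Dn; lia.
have h3 : c * l + 2 <= (c + 2) * l by nia.
have h4 : Δ.+1 <= 2 * Δ by lia.
apply: leq_trans (_ : (3 * B) * ((6 * Δ) * (((c + 2) * l) * (2 * Δ))) <= _).
  by apply: leq_mul => //; apply: leq_mul => //; apply: leq_mul.
rewrite expnS expn1. nia.
Qed.
Unset Implicit Arguments.

Theorem theorem1 :
  forall c : nat, 1 <= c ->
  exists (K : nat) (A : BeepAlgorithm),
  forall (V : finType) (e : rel V) (n Delta B : nat) (id : V -> nat) (m : V -> seq bool),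
    simple_graph e ->
    #|V| = n ->
    Delta = max_degree e ->
    injective id ->
    (forall v, 1 <= id v <= n ^ c) ->
    0 < B ->
    (forall v, size (m v) <= B) ->
    solves_local_broadcast_in A e n c Delta id m (K * B * Delta ^ 2 * up_log 2 n).
Proof.
move=> c _; exists (36 * (c + 2)), alg.
move=> V e n Delta B id m [esym eirr] Hn HD inj Hid HB Hm v u evu.
set T := 36 * (c + 2) * B * Delta ^ 2 * up_log 2 n.
set kn := knowledge_of e n c Delta id m.
have [F [hF gF]] := fam_some n c Delta.
have huv : u != v by apply: contraTneq evu => ->; rewrite eirr.
have euv : e u v by rewrite esym.
have idne : id u != id v by apply: contra huv => /eqP /inj ->.
have idb : forall w, id w <= n ^ c by move=> w; case/andP: (Hid w).
set nb := sort leq [seq id w | w <- enum (nbhd e u)].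
have nb_in : forall w, e u w -> id w \in nb.
  by move=> w hw; rewrite mem_sort map_f // mem_enum inE.
have nb_out : forall z, z \in nb -> exists w, e u w /\ z = id w.
  by move=> z; rewrite mem_sort => /mapP [w]; rewrite mem_enum inE => hw ->; exists w.
have size_nb : size nb = #|nbhd e u| by rewrite size_sort size_map -cardE.
have degu : #|nbhd e u| <= Delta.
  rewrite HD /max_degree. exact: leq_bigmax.
have D1 : 0 < Delta.
  apply: leq_trans degu; apply/card_gt0P; exists v; by rewrite inE.
set L := id u :: filter (fun z => z != id v) nb.
have sizeL : size L <= Delta.
  have c1 : 0 < count (pred1 (id v)) nb by rewrite -has_count has_pred1 nb_in.
  have e1 : count (fun z => z != id v) nb + count (pred1 (id v)) nb = size nb.
    by rewrite addnC; apply: count_predC.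
  apply: leq_trans degu; rewrite -size_nb /= size_filter -e1 addnC. exact: (leq_add c1 (leqnn _)).
have vL : id v \notin L by rewrite inE negb_or eq_sym idne /= mem_filter eqxx.
have Lb : forall z, z \in L -> z <= n ^ c.
  move=> z; rewrite inE => /orP [/eqP -> //|]; rewrite mem_filter => /andP [_ /nb_out [w [_ ->]]] //.
have L_nb : forall w, e u w -> w != v -> id w \in L.
  move=> w hw hwv; rewrite inE mem_filter nb_in // andbT.
  by apply/orP; right; apply: contra hwv => /eqP /inj ->.
have uL : id u \in L by rewrite inE eqxx.
pose x : 'I_(Nn n c) := inord (id v).
pose y := [ffun i : 'I_Delta => (inord (nth (id u) L i) : 'I_(Nn n c))].
have Hy : forall i, y i != x.
  move=> i; rewrite ffunE; apply/eqP => /(congr1 val).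
  have hb : nth (id u) L i <= n ^ c.
    case: (ltnP i (size L)) => hi; first by apply: Lb; rewrite mem_nth.
    by rewrite nth_default.
  rewrite /x /= !inordK ?ltnS ?idb // => hE.
  case: (ltnP i (size L)) => hi.
    by move: vL; rewrite -hE mem_nth.
  by move: idne; rewrite -hE nth_default // eqxx.
move/forallP: gF => /(_ x) /forallP /(_ y) /implyP /(_ (introT forallP Hy)) /existsP [j].
rewrite inE => /andP [hx /forallP hy].
pose t := tt n c Delta.
pose P := fun s => evz F s (id v) && all (fun z => ~~ evz F s z) L.
have Pj : P j.
  rewrite /P evzE ?idb // hx andTb; apply/allP => z zL.
  rewrite evzE ?Lb //.
  have hi : index z L < Delta by apply: leq_trans sizeL; rewrite index_mem.
  have := hy (Ordinal hi); rewrite ffunE /= nth_index //.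
pose s := find P (iota 0 t).
have hasP : has P (iota 0 t) by apply/hasP; exists (val j) => //; rewrite mem_iota /= ltn_ord.
have hs : s < t by move: hasP; rewrite has_find size_iota.
have Ps : P s by have := nth_find 0 hasP; rewrite nth_iota.
case/andP: Ps => hsv /allP hsL.
have t0 : 0 < t by rewrite /t /tt /kk /Dn; lia.
have n2 : 1 < n.
  rewrite -Hn; have := max_card [set u; v]; rewrite cards2 huv //.
have l0 : 0 < up_log 2 n by rewrite up_log_gt0 n2.
have Tb : (B.*2.+1) * t <= T by apply: time_ok.
have key : forall k, k < size (enc (m v)) ->
    nth false (history e kn alg T u) (k * t + s) = nth false (enc (m v)) k.
  move=> k hk.
  have hr : k * t + s < T.
    apply: leq_trans Tb; rewrite size_enc in hk.
    apply: (@leq_trans (k.+1 * t)); first by rewrite mulSn addnC ltn_add2r.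
    rewrite leq_mul2r; apply/orP; right; apply: (leq_trans hk); rewrite ltnS leq_double; exact: Hm.
  rewrite hist_nth //= hF !hist_size.
  have hmod : (k * t + s) %% tt n c Delta = s by rewrite modnMDl modn_small.
  have hdiv : (k * t + s) %/ tt n c Delta = k by rewrite divnMDl // divn_small ?addn0.
  rewrite hmod hdiv.
  rewrite (negbTE (hsL _ uL)) /=.
  case Hb : (nth false (enc (m v)) k).
    by apply/existsP; exists v; rewrite hist_size hmod hdiv euv hsv Hb.
  apply/existsP => [[w /andP [euw]]].
  rewrite hist_size hmod hdiv.
  case: (eqVneq w v) => [->|hwv]; first by rewrite Hb andbF.
  by rewrite (negbTE (hsL _ (L_nb w euw hwv))).
rewrite /= hF.
apply: dec_enc; last exact: key.
rewrite hist_size; apply: leq_trans Tb.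
apply: (@leq_trans B.*2.+1); first by rewrite ltnS; apply: leq_trans (Hm v) _; rewrite -addnn leq_addr.
by rewrite leq_pmulr.
Qed.
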